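(* Let $G=(V,E)$ be a bridged graph that contains an induced cycle of length greater than three, let $C$ be a shortest such induced cycle, of length $k$, and suppose $x\notin C$ is such that $C\cup\{x\}$ induces a uniquely centered wheel. For $v\in V\setminus (C\cup\{x\})$, let $A(v)$ denote the set of neighbours of $v$ in $C$. If $A(v)\ne\emptyset$, then (a) $A(v)$ induces a path with at most three vertices (i.e. consists of at most three consecutive vertices of $C$); and (b) if $v$ is not adjacent to $x$, then $A(v)$ induces a path with at most two vertices.
   Context: $G$ is bridged if it contains no isometric cycle (a cycle whose distances equal distances in $G$) of length greater than three. $C\cup\{x\}$ induces a wheel means $C$ is an induced cycle and $x$ is adjacent to all vertices of $C$; it is uniquely centered if there is no vertex $y\ne x$ such that $y$ is adjacent to all vertices of $C$ (i.e. $C\cup\{y\}$ is also an induced wheel). *)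

(* Defs.v *)
(* Cycles are given as a length k and a map
   c : nat -> T, whose vertices are c 0, ..., c (k-1) in cyclic order. *)
From mathcomp Require Import all_boot.
Set Implicit Arguments. Unset Strict Implicit. Unset Printing Implicit Defensive.

Definition simple_graph (T : Type) (adj : T -> T -> Prop) : Prop :=
  (forall u v, adj u v -> adj v u) /\ (forall u, ~ adj u u).

Inductive walk (T : Type) (adj : T -> T -> Prop) : T -> T -> nat -> Prop :=
  | walk0 u : walk adj u u 0
  | walkS u w v n : adj u w -> walk adj w v n -> walk adj u v n.+1.

Definition dist_is (T : Type) (adj : T -> T -> Prop) (u v : T) (n : nat) : Prop :=
  walk adj u v n /\ forall m, m < n -> ~ walk adj u v m.

Definition is_cycle (T : Type) (adj : T -> T -> Prop) (k : nat) (c : nat -> T) : Prop :=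
  [/\ 3 <= k,
      (forall i j, i < k -> j < k -> c i = c j -> i = j) &
      (forall i, i < k -> adj (c i) (c (i.+1 %% k)))].

Definition induced_cycle (T : Type) (adj : T -> T -> Prop) (k : nat) (c : nat -> T) : Prop :=
  is_cycle adj k c /\
  (forall i j, i < k -> j < k -> adj (c i) (c j) ->
     j = i.+1 %% k \/ i = j.+1 %% k).

Definition cyc_dist (k i j : nat) : nat :=
  let d := if i <= j then j - i else i - j in minn d (k - d).

Definition isometric_cycle (T : Type) (adj : T -> T -> Prop) (k : nat) (c : nat -> T) : Prop :=
  is_cycle adj k c /\
  (forall i j, i < k -> j < k -> dist_is adj (c i) (c j) (cyc_dist k i j)).

Definition bridged (T : Type) (adj : T -> T -> Prop) : Prop :=
  forall k c, isometric_cycle adj k c -> k <= 3.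

Definition wheel (T : Type) (adj : T -> T -> Prop) (k : nat) (c : nat -> T) (x : T) : Prop :=
  induced_cycle adj k c /\ forall i, i < k -> adj x (c i).

Definition uniquely_centered_wheel (T : Type) (adj : T -> T -> Prop)
    (k : nat) (c : nat -> T) (x : T) : Prop :=
  wheel adj k c x /\ forall y, y <> x -> ~ wheel adj k c y.

Definition nbrs_consecutive (T : Type) (adj : T -> T -> Prop)
    (k : nat) (c : nat -> T) (v : T) (m : nat) : Prop :=
  exists2 i, i < k &
    forall j, j < k -> (adj v (c j) <-> exists2 t, t < m & j = (i + t) %% k).

(* Main.v *)
Require Import Defs.
From mathcomp Require Import all_boot.
From mathcomp Require Import zify.
From Stdlib Require Import Classical.
Set Implicit Arguments. Unset Strict Implicit.

Ltac redmod := repeat match goal with |- context [?a %% ?b] =>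
  let n := eval vm_compute in (a %% b) in change (a %% b) with n end.
Ltac redmodH H := repeat match type of H with context [?a %% ?b] =>
  let n := eval vm_compute in (a %% b) in change (a %% b) with n in H end.

Lemma least_ex (Q : nat -> Prop) n : Q n -> exists m, Q m /\ (forall j, j < m -> ~ Q j).
Proof.
elim: n {-2}n (leqnn n) => [|N IH] n Hn HQ.
  exists n; split => // j Hj; lia.
case: (classic (exists j, j < n /\ Q j)) => [[j [Hj Qj]]|H].
  apply: (IH j) => //; lia.
exists n; split => // j Hj Qj; apply: H; by exists j.
Qed.

Lemma modeq a k t s : t < k -> s < k -> (a + t) %% k = (a + s) %% k -> t = s.
Proof.
move=> Ht Hs /eqP; rewrite eqn_modDl !modn_small //; by move/eqP.
Qed.

Lemma walk_0 T (adj : T -> T -> Prop) u w : walk adj u w 0 -> u = w.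
Proof. by move=> H; inversion H. Qed.

Lemma walk_1 T (adj : T -> T -> Prop) u w : walk adj u w 1 -> adj u w.
Proof. move=> H; inversion H; subst. by rewrite -(walk_0 H4). Qed.

Lemma d0 T (adj : T -> T -> Prop) u : dist_is adj u u 0.
Proof. split; [constructor | by []]. Qed.

Lemma d1 T (adj : T -> T -> Prop) u w : u <> w -> adj u w -> dist_is adj u w 1.
Proof.
move=> Hn Ha; split; first by apply: walkS Ha (walk0 _ _).
by case=> // _ H; have := walk_0 H.
Qed.

Lemma d2 T (adj : T -> T -> Prop) u w z : u <> z -> ~ adj u z -> adj u w -> adj w z ->
  dist_is adj u z 2.
Proof.
move=> Hn Hna Ha Hb; split; first by apply: walkS Ha (walkS Hb (walk0 _ _)).
case=> [_ H|[_ H|]] //; [by have := walk_0 H | by have := walk_1 H].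
Qed.

Lemma cyc4 T (adj : T -> T -> Prop) w0 w1 w2 w3 : simple_graph adj ->
  adj w0 w1 -> adj w1 w2 -> adj w2 w3 -> adj w3 w0 -> ~ adj w0 w2 -> ~ adj w1 w3 ->
  w0 <> w1 -> w0 <> w2 -> w0 <> w3 -> w1 <> w2 -> w1 <> w3 -> w2 <> w3 ->
  induced_cycle adj 4 (fun t => match t with 0 => w0 | 1 => w1 | 2 => w2 | _ => w3 end).
Proof.
move=> [Hsym Hirr] A01 A12 A23 A30 N02 N13 D01 D02 D03 D12 D13 D23.
split; first split => //.
- move=> [|[|[|[|i]]]] [|[|[|[|j]]]] //= _ _ E; congruence.
- move=> [|[|[|[|i]]]] //= _; redmod => //=.
- move=> [|[|[|[|i]]]] [|[|[|[|j]]]] //= _ _ H; redmod;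
  first [ by left | by right | exfalso;
    first [exact (N02 H) | exact (N02 (Hsym _ _ H)) | exact (N13 H)
          | exact (N13 (Hsym _ _ H)) | exact (Hirr _ H)]].
Qed.

Lemma iso4 T (adj : T -> T -> Prop) c : simple_graph adj -> induced_cycle adj 4 c ->
  isometric_cycle adj 4 c.
Proof.
move=> [Hsym Hirr] [[_ Hinj Hadj] Hch].
have A0 : adj (c 0) (c 1) by have := Hadj 0 isT; redmod.
have A1 : adj (c 1) (c 2) by have := Hadj 1 isT; redmod.
have A2 : adj (c 2) (c 3) by have := Hadj 2 isT; redmod.
have A3 : adj (c 3) (c 0) by have := Hadj 3 isT; redmod.
have B0 := Hsym _ _ A0. have B1 := Hsym _ _ A1. have B2 := Hsym _ _ A2.
have B3 := Hsym _ _ A3.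
have N02 : ~ adj (c 0) (c 2) by move=> H; have := Hch 0 2 isT isT H; redmod; case.
have N13 : ~ adj (c 1) (c 3) by move=> H; have := Hch 1 3 isT isT H; redmod; case.
have N20 : ~ adj (c 2) (c 0) by move=> /Hsym.
have N31 : ~ adj (c 3) (c 1) by move=> /Hsym.
have D : forall i j, i < 4 -> j < 4 -> i <> j -> c i <> c j.
  by move=> i j Hi Hj Hn E; apply: Hn; apply: Hinj.
split; first by split.
move=> [|[|[|[|i]]]] [|[|[|[|j]]]] //= _ _;
match goal with |- dist_is _ _ _ (cyc_dist 4 ?i ?j) =>
  let n := eval vm_compute in (cyc_dist 4 i j) in change (cyc_dist 4 i j) with n end;
first [ apply: d0 | apply: d1 => //; apply: D => //
      | eapply d2; [apply: D => // | by [] | eassumption | eassumption ] ].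
Qed.

Lemma gap T (adj : T -> T -> Prop) k c v a d : simple_graph adj ->
  induced_cycle adj k c ->
  (forall k' c', induced_cycle adj k' c' -> 3 < k' -> k <= k') ->
  (forall i, i < k -> v <> c i) ->
  2 <= d -> d + 3 <= k ->
  adj v (c ((a + 0) %% k)) -> adj v (c ((a + d) %% k)) ->
  (forall s, 0 < s -> s < d -> ~ adj v (c ((a + s) %% k))) -> False.
Proof.
move=> [Hsym Hirr] [[Hk3 Hinj Hadj] Hch] Hmin Hvc Hd2 Hdk H0 Hd Hin.
have kpos : 0 < k by lia.
have Hmod : forall t, (a + t) %% k < k by move=> t; rewrite ltn_mod.
have Hsucc : forall t, ((a + t) %% k).+1 %% k = (a + t.+1) %% k.
  by move=> t; rewrite -addn1 modnDml addn1 addnS.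
suff: k <= d + 2 by lia.
apply: (Hmin (d + 2) (fun t => if t <= d then c ((a + t) %% k) else v)); last by lia.
split; first split.
- by lia.
- move=> i j Hi Hj /=.
  case: (leqP i d) => Hid; case: (leqP j d) => Hjd.
  + move/(Hinj _ _ (Hmod _) (Hmod _)) => E. apply: (@modeq a k i j) => //; lia.
  + move=> E; exfalso; exact: (Hvc _ (Hmod _) (esym E)).
  + move=> E; exfalso; exact: (Hvc _ (Hmod _) E).
  + move=> _; lia.
- move=> i Hi /=.
  case: (ltnP i d) => Hid.
  + rewrite (@modn_small i.+1); last by lia.
    rewrite (ltnW Hid) Hid. rewrite -Hsucc. exact: Hadj.
  + case: (i =P d) => [->|Hne].
    * rewrite leqnn (@modn_small d.+1); last by lia.
      rewrite ltnn. exact: Hsym.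
    * have -> : i = d + 1 by lia.
      have -> : (d + 1).+1 = d + 2 by lia.
      rewrite modnn. have -> : (d + 1 <= d) = false by lia. by [].
- move=> i j Hi Hj /=.
  case: (leqP i d) => Hid; case: (leqP j d) => Hjd.
  + move/Hch => /(_ (Hmod _) (Hmod _)); rewrite !Hsucc.
    case=> E.
    * left; rewrite (@modn_small i.+1); [apply: (@modeq a k j i.+1) => //; lia | lia].
    * right; rewrite (@modn_small j.+1); [apply: (@modeq a k i j.+1) => //; lia | lia].
  + move/Hsym => H.
    have Hj' : j = d + 1 by lia.
    subst j.
    case: (i =P 0) => [->|H1]; first by right; rewrite (_ : (d + 1).+1 = d + 2) ?modnn //; lia.
    case: (i =P d) => [->|H2]; first by left; rewrite (@modn_small d.+1) //; lia.
    exfalso; apply: (Hin i) => //; lia.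
  + move=> H.
    have Hi' : i = d + 1 by lia.
    subst i.
    case: (j =P 0) => [->|H1]; first by left; rewrite (_ : (d + 1).+1 = d + 2) ?modnn //; lia.
    case: (j =P d) => [->|H2]; first by right; rewrite (@modn_small d.+1) //; lia.
    exfalso; apply: (Hin j) => //; lia.
  + have -> : i = j by lia.
    by move/Hirr.
Qed.

Theorem mainTheorem14 (T : Type) (adj : T -> T -> Prop) (k : nat) (c : nat -> T) (x v : T) :
  simple_graph adj ->
  bridged adj ->
  induced_cycle adj k c -> 3 < k ->
  (forall k' c', induced_cycle adj k' c' -> 3 < k' -> k <= k') ->
  (forall i, i < k -> c i <> x) ->
  uniquely_centered_wheel adj k c x ->
  (forall i, i < k -> v <> c i) -> v <> x ->
  (exists2 i, i < k & adj v (c i)) ->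
  (exists m, [/\ 1 <= m, m <= 3 & nbrs_consecutive adj k c v m]) /\
  (~ adj v x -> exists m, [/\ 1 <= m, m <= 2 & nbrs_consecutive adj k c v m]).
Proof.
move=> Hsg Hbr Hind Hk Hmin Hcx [[_ Hwx] Huniq] Hvc Hvx [i0 Hi0 Hvi0].
have Hsg' := Hsg. move: Hsg' => [Hsym Hirr].
have Hind' := Hind. move: Hind' => [[Hk3 Hinj Hadj] Hch].
have Hk5 : 4 < k.
  case: (k =P 4) => [Hk4|Hk4]; last by lia.
  subst k. have := Hbr 4 c (iso4 Hsg Hind). by [].
have [j0 [Hj0 Hnj0]] : exists j0, j0 < k /\ ~ adj v (c j0).
  apply: NNPP => H. apply: (Huniq v Hvx). split => // j Hj.
  apply: NNPP => Hn. apply: H. by exists j.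
pose R := fun s => adj v (c ((j0 + s) %% k)).
have kpos : 0 < k by lia.
have Hmod : forall t, t %% k < k by move=> t; rewrite ltn_mod.
have R0 : ~ R 0 by rewrite /R addn0 modn_small.
have Rper : forall s, R (s + k) <-> R s by move=> s; rewrite /R addnA modnDr.
have Rall : forall j, j < k -> exists s, s < k /\ (j0 + s) %% k = j.
  move=> j Hj. case: (leqP j0 j) => H.
  - exists (j - j0); split; first by lia.
    rewrite (_ : j0 + (j - j0) = j); [by rewrite modn_small | lia].
  - exists (j + k - j0); split; first by lia.
    rewrite (_ : j0 + (j + k - j0) = j + k); [by rewrite modnDr modn_small | lia].
have gapR : forall b d, 2 <= d -> d + 3 <= k -> R b -> R (b + d) ->
    (forall s, 0 < s -> s < d -> ~ R (b + s)) -> False.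
  move=> b d H1 H2 Rb Rbd Hi.
  apply: (@gap T adj k c v (j0 + b) d) => //.
  - by rewrite addn0.
  - by rewrite -addnA.
  - move=> s H3 H4; rewrite -addnA; exact: Hi.
have [s1 [Hs1 Rs1]] : exists s, s < k /\ R s.
  have [s [Hs Es]] := Rall i0 Hi0. exists s; split => //. by rewrite /R Es.
have [f [Rf Hfmin]] := @least_ex R _ Rs1.
have Hfk : f < k.
  case: (ltnP f k) => // H; exfalso; apply: (Hfmin s1) => //; lia.
have Hf1 : 1 <= f.
  case: f Rf {Hfmin Hfk} => // Rf; exfalso; exact: R0.
have [e [He Hemin]] : exists e, ~ R (f + e) /\ (forall t, t < e -> R (f + t)).
  have Rk : ~ R (f + (k - f)).
    rewrite (_ : f + (k - f) = 0 + k); last by lia.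
    by rewrite Rper.
  have [e [He Hemin]] := @least_ex (fun t => ~ R (f + t)) _ Rk.
  exists e; split => // t Ht; apply: NNPP; exact: Hemin.
have He1 : 1 <= e.
  case: e He Hemin => // He; exfalso; apply: He; by rewrite addn0.
have Hek : e <= k - f.
  case: (leqP e (k - f)) => // H; exfalso.
  have := Hemin (k - f) H. rewrite (_ : f + (k - f) = 0 + k); last by lia.
  by rewrite Rper.
have Hafter : forall s, f + e <= s -> s <= k -> ~ R s.
  move=> s H1 H2 Rs.
  have Hsk : s < k.
    case: (s =P k) => [E|E]; last by lia.
    subst s; exfalso; apply: R0; apply: (proj1 (Rper 0)); by rewrite add0n.
  have Ru0 : R (f + e + (s - (f + e))) by rewrite (_ : f + e + (s - (f + e)) = s) //; lia.
  have [u [Ru Humin]] := @least_ex (fun t => R (f + e + t)) _ Ru0.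
  have Hu1 : 1 <= u.
    case: u Ru Humin => // Ru _; exfalso; apply: He; by rewrite -(addn0 (f + e)).
  have Hus : u <= s - (f + e).
    case: (leqP u (s - (f + e))) => // H; exfalso; exact: (Humin _ H Ru0).
  have Reb : R (f + e - 1).
    rewrite (_ : f + e - 1 = f + (e - 1)); last by lia.
    apply: Hemin; lia.
  case: (leqP (u + 1 + 3) k) => Hd.
  - apply: (gapR (f + e - 1) (u + 1)) => //; first by lia.
    + by rewrite (_ : f + e - 1 + (u + 1) = f + e + u) //; lia.
    + move=> s' H3 H4.
      rewrite (_ : f + e - 1 + s' = f + e + (s' - 1)); last by lia.
      apply: Humin; lia.
  - have Ef : f = 1 by lia.
    have Ee : e = 1 by lia.
    have Eu : u = k - 3 by lia.
    apply: (gapR (k - 1) 2); [lia | lia | | |].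
    + by move: Ru; rewrite Ef Ee Eu (_ : 1 + 1 + (k - 3) = k - 1) //; lia.
    + rewrite (_ : k - 1 + 2 = 1 + k); last by lia.
      by rewrite Rper -Ef.
    + move=> s' H3 H4. rewrite (_ : k - 1 + s' = 0 + k); last by lia.
      by rewrite Rper.
have He3 : e <= 3.
  case: (leqP e 3) => // He4; exfalso.
  apply: (gapR (f + e - 1) (k - e + 1)); try lia.
  - rewrite (_ : f + e - 1 = f + (e - 1)); last by lia.
    apply: Hemin; lia.
  - by rewrite (_ : f + e - 1 + (k - e + 1) = f + k) ?Rper //; lia.
  - move=> s H3 H4.
    case: (leqP (f + e - 1 + s) k) => H5.
    + apply: Hafter => //; lia.
    + rewrite (_ : f + e - 1 + s = (f + e - 1 + s - k) + k); last by lia.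
      rewrite Rper. apply: Hfmin; lia.
have Hcons : nbrs_consecutive adj k c v e.
  exists ((j0 + f) %% k); first exact: Hmod.
  move=> j Hj; split.
  - move=> Hv. have [s [Hs Es]] := Rall j Hj.
    have Rs : R s by rewrite /R Es.
    have Hsf : f <= s.
      case: (leqP f s) => // H; exfalso; exact: (Hfmin s H Rs).
    have Hse : s < f + e.
      case: (ltnP s (f + e)) => // H; exfalso; apply: (Hafter s) => //; lia.
    exists (s - f); first by lia.
    by rewrite modnDml -addnA (_ : f + (s - f) = s) //; lia.
  - case=> t Ht ->. rewrite modnDml -addnA. exact: Hemin.
split; first by exists e; split.
move=> Hnvx. exists e; split => //.
case: (leqP e 2) => // He3'; exfalso.
have Ee : e = 3 by lia.
have Ra : R f by rewrite -(addn0 f); apply: Hemin; lia.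
have Rb : R (f + 2) by apply: Hemin; lia.
set a := (j0 + f) %% k. set b := (j0 + (f + 2)) %% k.
have Ha : a < k by apply: Hmod.
have Hb : b < k by apply: Hmod.
have Hab : a <> b.
  rewrite /a /b addnA => E.
  have := @modeq (j0 + f) k 0 2; rewrite addn0; move/(_ _ _ E); lia.
have Nab : ~ adj (c a) (c b).
  move=> H; have := Hch _ _ Ha Hb H.
  have Sa : a.+1 %% k = (j0 + f + 1) %% k by rewrite /a -addn1 modnDml.
  have Sb : b.+1 %% k = (j0 + f + 3) %% k by rewrite /b -addn1 modnDml !addnA -addnA.
  rewrite Sa Sb /a /b addnA.
  case=> E.
  - have := @modeq (j0 + f) k 2 1; move/(_ _ _ E); lia.
  - have := @modeq (j0 + f) k 0 3; rewrite addn0; move/(_ _ _ E); lia.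
have := Hmin 4 _ (@cyc4 T adj v (c a) x (c b) Hsg Ra (Hsym _ _ (Hwx _ Ha)) (Hwx _ Hb)
   (Hsym _ _ Rb) Hnvx Nab (Hvc _ Ha) Hvx (Hvc _ Hb) (Hcx _ Ha) _ (fun E => Hcx _ Hb (esym E))).
move=> H.
have Hcab : c a <> c b by move=> E; apply: Hab; exact: (Hinj _ _ Ha Hb E).
have := H Hcab isT; lia.
Qed.
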